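(* Let $(E,p,X)$ be an étalé space with $X$ a Boolean space. Then $(E,p,X)$ is isomorphic to its double dual $E^{\ast\ast}\to X^{\ast\ast}$ via the map $\beta\colon E\to E^{\ast\ast}$, $a\mapsto K_a=\{x\in E^{\ast}: a\in x\}$ (together with $X\to X^{\ast\ast}$, $u\mapsto N_u=\{y\in X^{\ast}: u\in y\}$).
   Context: A Boolean space is a Hausdorff space with a basis of compact-open sets. An étalé space $(E,p,X)$ is a surjective local homeomorphism $p\colon E\to X$. Its dual Boolean set is $\widetilde p\colon E^{\ast}\to X^{\ast}$, where $X^{\ast}$ is the Boolean algebra of compact-open subsets of $X$, $E^{\ast}$ the set of compact-open local sections (open sets on which $p$ is injective), $\widetilde p(C)=p(C)$, with order $C\le D$ iff $C\subseteq D$ (equivalently $C=D\cap p^{-1}(p(C))$). The dual étalé space of a Boolean set $q\colon Y\to B$ is $\widetilde q\colon Y^{\ast}\to B^{\ast}$ where $Y^{\ast}$ is the set of ultrafilters (maximal proper non-empty down-directed upward-closed subsets) of $Y$ with basis $L(a)=\{G:a\in G\}$, $B^{\ast}$ the ultrafilters of $B$ with basis $M(b)=\{F:b\in F\}$, and $\widetilde q(G)=q(G)$. $E^{\ast\ast}\to X^{\ast\ast}$ is the dual étalé space of $E^{\ast}\to X^{\ast}$. Two étalé spaces $(E,f,X)$, $(F,g,Y)$ are isomorphic if there are homeomorphisms $\varphi\colon E\to F$, $\psi\colon X\to Y$ with $g\varphi=\psi f$. *)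

(* Defs.v *)
From HB Require Import structures.
From mathcomp Require Import all_boot all_classical topology.
Set Implicit Arguments. Unset Strict Implicit. Unset Printing Implicit Defensive.
Local Open Scope classical_set_scope.

Definition compact_open (T : topologicalType) (A : set T) : Prop :=
  compact A /\ open A.

Definition boolean_space (T : topologicalType) : Prop :=
  hausdorff_space T /\
  (forall (U : set T) (x : T), open U -> U x ->
     exists B : set T, compact_open B /\ B x /\ B `<=` U).

Definition local_homeomorphism (E X : topologicalType) (p : E -> X) : Prop :=
  forall e : E, exists U : set E,
    [/\ open U, U e, open (p @` U), {in U &, injective p} &
        ({within U, continuous p} /\
         (forall V : set E, open V -> V `<=` U -> open (p @` V)))].

Definition etale (E X : topologicalType) (p : E -> X) : Prop :=
  (forall u : X, exists e : E, p e = u) /\ local_homeomorphism p.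

Definition Xstar (X : topologicalType) : Type := {V : set X | compact_open V}.

(* E^* : compact-open local sections (compact-open sets on which p is injective) *)
Definition Estar (E X : topologicalType) (p : E -> X) : Type :=
  {C : set E | compact_open C /\ {in C &, injective p}}.

Definition dual_img (E X : topologicalType) (p : E -> X)
  (G : set (Estar p)) : set (Xstar X) :=
  fun y => exists2 C : Estar p, G C & proj1_sig y = p @` proj1_sig C.

Definition filter_of (Y : Type) (le : Y -> Y -> Prop) (G : set Y) : Prop :=
  [/\ G !=set0,
      G <> setT,
      (forall a b, G a -> G b -> exists2 c, G c & le c a /\ le c b)
    & (forall a b, G a -> le a b -> G b)].

Definition ultrafilter_of (Y : Type) (le : Y -> Y -> Prop) (G : set Y) : Prop :=
  filter_of le G /\ (forall H : set Y, filter_of le H -> G `<=` H -> H = G).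

Definition Estar_le (E X : topologicalType) (p : E -> X) (C D : Estar p) : Prop :=
  proj1_sig C `<=` proj1_sig D.
Definition Xstar_le (X : topologicalType) (U V : Xstar X) : Prop :=
  proj1_sig U `<=` proj1_sig V.

Definition Estarstar (E X : topologicalType) (p : E -> X) : Type :=
  {G : set (Estar p) | ultrafilter_of (@Estar_le E X p) G}.
Definition Xstarstar (X : topologicalType) : Type :=
  {F : set (Xstar X) | ultrafilter_of (@Xstar_le X) F}.

(* topology generated by a basis: opens are unions of basic sets *)
Definition basis_open (Z I : Type) (L : I -> set Z) (W : set Z) : Prop :=
  forall z, W z -> exists i, L i z /\ L i `<=` W.

Definition Lbasic (E X : topologicalType) (p : E -> X) (a : Estar p)
  : set (Estarstar p) := fun G => proj1_sig G a.
Definition Mbasic (X : topologicalType) (b : Xstar X) : set (Xstarstar X) :=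
  fun F => proj1_sig F b.

Definition homeo (A B : Type) (openA : set A -> Prop) (openB : set B -> Prop)
  (f : A -> B) : Prop :=
  bijective f /\
  (forall V : set B, openB V -> openA (f @^-1` V)) /\
  (forall U : set A, openA U -> openB (f @` U)).

Definition Kset (E X : topologicalType) (p : E -> X) (a : E) : set (Estar p) :=
  fun x => proj1_sig x a.
Definition Nset (X : topologicalType) (u : X) : set (Xstar X) :=
  fun y => proj1_sig y u.

Arguments Kset [E X] p a _.
Arguments dual_img [E X] p G _.
Arguments Estar [E X] p.
Arguments Estarstar [E X] p.
Arguments Lbasic [E X] p a _.

(* Main.v *)
Require Import Defs.
From mathcomp Require Import all_boot all_classical topology.
Set Implicit Arguments. Unset Strict Implicit. Unset Printing Implicit Defensive.
Local Open Scope classical_set_scope.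

Lemma open_sub_nbhs (T : topologicalType) (S : set T) :
  (forall x, S x -> exists U, [/\ open U, U x & U `<=` S]) -> open S.
Proof.
move=> H; rewrite openE => x /H [U [oU Ux sUS]].
rewrite /interior; apply: (filterS sUS); exact: open_nbhs_nbhs.
Qed.

Lemma fip_closed (T : topologicalType) (F : set (set T)) :
  (forall c, F c -> closed c) -> (forall c, F c -> compact c) ->
  F !=set0 -> (forall c, F c -> c !=set0) ->
  (forall c1 c2, F c1 -> F c2 -> exists2 c, F c & c `<=` c1 `&` c2) ->
  exists a, forall c, F c -> c a.
Proof.
move=> Fcl Fco [c0 Fc0] Fne Fdir.
have Fil : Filter (filter_from F id).
  by apply: filter_from_filter; [exists c0|exact: Fdir].
have PF : ProperFilter (filter_from F id) by apply: filter_from_proper.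
have Gc : forall c, F c -> filter_from F id c by move=> c Fc; exists c.
have [x [c0x clx]] := Fco c0 Fc0 _ PF (Gc c0 Fc0).
exists x => c Fc; apply: (Fcl c Fc) => B nB.
exact: (clx c B (Gc c Fc) nB).
Qed.

Section Gen.
Variables (T : topologicalType) (P : set T -> Prop).
Definition Ysig := {C : set T | P C}.
Definition Yle (C D : Ysig) := proj1_sig C `<=` proj1_sig D.
Definition Kg (a : T) : set Ysig := fun x => proj1_sig x a.
Definition Lg (c : Ysig) : set {G : set Ysig | ultrafilter_of Yle G} :=
  fun G => proj1_sig G c.

Hypothesis P0 : P set0.
Hypothesis Popen : forall C, P C -> open C.
Hypothesis Pbasis : forall a U, open U -> U a -> exists C, [/\ P C, C a & C `<=` U].
Hypothesis Psep : forall c D a, P c -> P D -> c `<=` D -> D a -> ~ c a ->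
  exists U, [/\ open U, U a & U `&` c = set0].
Hypothesis Pfip : forall F : set (set T), (forall c, F c -> P c) -> F !=set0 ->
  (forall c, F c -> c !=set0) ->
  (forall c1 c2, F c1 -> F c2 -> exists2 c, F c & c `<=` c1 `&` c2) ->
  exists a, forall c, F c -> c a.
Hypothesis PT0 : forall a b, a <> b -> exists C, [/\ P C, C a & ~ C b].

Lemma filter_empty (H : set Ysig) (c : Ysig) : filter_of Yle H -> H c ->
  proj1_sig c = set0 -> False.
Proof.
move=> [_ Hprop _ Hup] Hc c0; apply: Hprop; apply/seteqP; split=> // y _.
by apply: (Hup c) => // z; rewrite c0.
Qed.

Lemma K_filter a : filter_of Yle (Kg a).
Proof.
split.
- have [C [PC Ca _]] := @Pbasis a setT openT I.
  by exists (exist _ C PC).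
- move=> Kall.
  have : Kg a (exist _ set0 P0) by rewrite Kall.
  by [].
- move=> [C1 P1] [C2 P2] /= C1a C2a.
  have [C [PC Ca sC]] := @Pbasis a _ (openI (Popen P1) (Popen P2)) (conj C1a C2a).
  exists (exist _ C PC) => //; split=> z /sC [] //.
- by move=> [C1 P1] [C2 P2] /= C1a; apply.
Qed.

Lemma K_ultra a : ultrafilter_of Yle (Kg a).
Proof.
split; first exact: K_filter.
move=> H Hf sKH; have [Hne Hprop Hdir Hup] := Hf.
apply/seteqP; split; last exact: sKH.
move=> C HC; apply: contrapT => nCa.
have [[D0 PD0] D0a] : Kg a !=set0 by have [] := K_filter a.
have HD0 : H (exist _ D0 PD0) by exact: sKH.
have [c Hc [scC scD0]] := Hdir _ _ HC HD0.
have nca : ~ proj1_sig c a by move=> /scC.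
have [U [oU Ua Uc]] := Psep (proj2_sig c) PD0 scD0 D0a nca.
have [D' [PD' D'a sD'U]] := Pbasis oU Ua.
have HD' : H (exist _ D' PD') by exact: sKH.
have [c'' Hc'' [s1 s2]] := Hdir _ _ Hc HD'.
apply: (filter_empty Hf Hc''); apply/seteqP; split=> // z zc.
have := s1 z zc; have := s2 z zc => /= /sD'U Uz cz.
by have : (U `&` proj1_sig c) z by []; rewrite Uc.
Qed.

Lemma ultra_K (G : set Ysig) : ultrafilter_of Yle G -> exists a, G = Kg a.
Proof.
move=> [Gf Gmax]; have [Gne Gprop Gdir Gup] := Gf.
pose F := fun c => exists2 x, G x & proj1_sig x = c.
have [a Fa] : exists a, forall c, F c -> c a.
  apply: Pfip.
  - by move=> c [x _ <-]; exact: proj2_sig.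
  - by have [x Gx] := Gne; exists (proj1_sig x); exists x.
  - move=> c [x Gx <-]; apply: contrapT => /set0P/negP/negPn/eqP c0.
    exact: (filter_empty Gf Gx c0).
  - move=> c1 c2 [x1 G1 <-] [x2 G2 <-].
    have [c Gc [s1 s2]] := Gdir _ _ G1 G2.
    by exists (proj1_sig c); [exists c|split; [apply: s1|apply: s2]].
exists a; symmetry; apply: Gmax; first exact: K_filter.
by move=> x Gx; apply: Fa; exists x.
Qed.

Definition betag (a : T) : {G : set Ysig | ultrafilter_of Yle G} :=
  exist _ (Kg a) (K_ultra a).

Lemma betag_inj : injective betag.
Proof.
move=> a b /(congr1 (@proj1_sig _ _)) /= Kab; apply: contrapT => nab.
have [C [PC Ca nCb]] := PT0 nab.
have : Kg a (exist _ C PC) by [].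
by rewrite Kab.
Qed.

Lemma betag_surj G : exists a, betag a = G.
Proof.
have [a Ga] := ultra_K (proj2_sig G).
by exists a; case: G Ga => G pG /= Ga; apply: eq_exist.
Qed.

Lemma betag_homeo : homeo open (basis_open Lg) betag.
Proof.
split.
  pose g G := proj1_sig (cid (betag_surj G)).
  have gK : forall G, betag (g G) = G by move=> G; rewrite /g; case: cid.
  exists g => // a; apply: betag_inj; exact: gK.
split.
  move=> V bV; apply: open_sub_nbhs => a /bV [c [Lca sLV]].
  exists (proj1_sig c); split.
  - exact: Popen (proj2_sig c).
  - exact: Lca.
  - by move=> z cz; apply: sLV.
move=> U oU G [a Ua <-].
have [C [PC Ca sCU]] := Pbasis oU Ua.
exists (exist _ C PC); split => // G' LG'.
have [b bG] := betag_surj G'; subst G'.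
by exists b => //; apply: sCU; exact: LG'.
Qed.

End Gen.

Lemma haus_sep (T : topologicalType) : hausdorff_space T ->
  forall x y : T, x <> y -> exists U, [/\ open U, U x & ~ U y].
Proof.
rewrite open_hausdorff => H x y /eqP nxy.
have [[A B] /= [xA yB] [oA oB /eqP AB0]] := H x y nxy.
exists A; split => //; first exact: set_mem.
move=> Ay; have : (A `&` B) y by split=> //; exact: set_mem.
by rewrite AB0.
Qed.

Lemma closed_preimage (S T : topologicalType) (f : S -> T) (B : set T) :
  continuous f -> closed B -> closed (f @^-1` B).
Proof.
move=> cf cB; rewrite -[f @^-1` B]setCK; apply: open_closedC.
have -> : ~` (f @^-1` B) = f @^-1` (~` B) by [].
by move/continuousP : cf; apply; exact: closed_openC.
Qed.

Section Etale.
Variables (E X : topologicalType) (p : E -> X).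
Hypothesis et : etale p.
Hypothesis bX : boolean_space X.

Definition secP (C : set E) := Defs.compact_open C /\ {in C &, injective p}.

Lemma p_cont : continuous p.
Proof.
move=> x; have [_ lh] := et; have [W [oW Wx _ _ [cW _]]] := lh x.
by move: cW; rewrite continuous_open_subspace // => /(_ x (mem_set Wx)).
Qed.

Lemma p_open V : open V -> open (p @` V).
Proof.
move=> oV; apply: open_sub_nbhs => _ [x Vx <-].
have [_ lh] := et; have [W [oW Wx _ _ [_ opW]]] := lh x.
exists (p @` (V `&` W)); split.
- by apply: opW; [exact: openI|exact: subIsetr].
- by exists x.
- exact: image_subset (@subIsetl _ V W).
Qed.

Lemma sec_basis a U : open U -> U a -> exists C, [/\ secP C, C a & C `<=` U].
Proof.
move=> oU Ua; have [_ lh] := et; have [W [oW Wa _ injW [_ opW]]] := lh a.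
have oV : open (p @` (U `&` W)) by apply: opW; [exact: openI|exact: subIsetr].
have [_ bb] := bX.
have hV : (p @` (U `&` W)) (p a) by exists a.
have [B [[cB oB] [Bpa sBV]]] := bb _ (p a) oV hV.
pose C := U `&` W `&` p @^-1` B.
have CW : C `<=` W by move=> z [[]].
exists C; split; last by move=> z [[]].
- split; last by move=> x y /set_mem/CW xW /set_mem/CW yW; apply: injW; exact: mem_set.
  split; last first.
    apply: openI; first exact: openI.
    by move/continuousP: p_cont; apply.
  move=> F PF FC.
  have PpF : ProperFilter (fmap p F) by exact: fmap_proper_filter.
  have FB : F (p @^-1` B) by apply: (@filterS _ F _ C) => // z [_ Bz].
  have [y [By cly]] := cB _ PpF FB.
  have [x [Ux Wx] pxy] := sBV y By.
  have Cx : C x by split; [split|rewrite /= pxy].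
  exists x; split => // A N FA Nx.
  move: Nx; rewrite nbhsE => -[O [oO Ox] sON].
  have sO'W : O `&` U `&` W `<=` W by move=> z [].
  have oO' : open (p @` (O `&` U `&` W)).
    by apply: opW => //; apply: openI => //; exact: openI.
  have nO' : nbhs y (p @` (O `&` U `&` W)).
    by apply: open_nbhs_nbhs; split => //; exists x => //; rewrite -pxy.
  have FAC : fmap p F (p @` (A `&` C)).
    by apply: (@filterS _ F _ (A `&` C)); [move=> z Az; exists z|exact: filterI].
  have [_ [[c1 [Ac1 Cc1] <-] [o1 O1 po]]] := cly _ _ FAC nO'.
  have co : c1 = o1.
    apply: injW; [exact/mem_set/CW|apply/mem_set; move: O1 => [] //|by []].
  by exists c1; split => //; apply: sON; rewrite co; case: O1 => [[]].
- by split; [split|rewrite /=].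
Qed.


Lemma hX : hausdorff_space X. Proof. by case: bX. Qed.

Lemma img_compact C : compact C -> compact (p @` C).
Proof. by apply: continuous_compact; exact: continuous_subspaceT p_cont. Qed.

Lemma secP0 : secP set0.
Proof. by split; [split; [exact: compact0|exact: open0]|move=> x y /set_mem]. Qed.

Lemma sec_sep c D a : secP c -> secP D -> c `<=` D -> D a -> ~ c a ->
  exists U, [/\ open U, U a & U `&` c = set0].
Proof.
move=> [[cc oc] ic] [[cD oD] iD] scD Da nca.
exists (p @^-1` (~` (p @` c))); split.
- move/continuousP: p_cont; apply; apply: closed_openC.
  exact: compact_closed hX (img_compact cc).
- move=> [z cz pz]; apply: nca.
  have -> : a = z by apply: iD; [exact: mem_set|apply/mem_set/scD|].
  exact: cz.
- by apply/seteqP; split=> // z [nz cz]; apply: nz; exists z.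
Qed.

Lemma sec_fip (F : set (set E)) : (forall c, F c -> secP c) -> F !=set0 ->
  (forall c, F c -> c !=set0) ->
  (forall c1 c2, F c1 -> F c2 -> exists2 c, F c & c `<=` c1 `&` c2) ->
  exists a, forall c, F c -> c a.
Proof.
move=> FP [c0 Fc0] Fne Fdir.
pose G := fun V => exists2 c, F c & p @` c = V.
have [u Gu] : exists u, forall V, G V -> V u.
  apply: fip_closed.
  - move=> V [c Fc <-]; apply: compact_closed hX _.
    by apply: img_compact; have [[]] := FP c Fc.
  - by move=> V [c Fc <-]; apply: img_compact; have [[]] := FP c Fc.
  - by exists (p @` c0); exists c0.
  - by move=> V [c Fc <-]; have [z cz] := Fne c Fc; exists (p z); exists z.
  - rewrite /G => V1 V2 [c1 F1 e1] [c2 F2 e2]; subst V1 V2; have [c Fc sc] := Fdir _ _ F1 F2.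
    exists (p @` c); first by exists c.
    by move=> _ [z cz <-]; have [] := sc z cz; split; exists z.
have [a c0a pa] : (p @` c0) u by apply: Gu; exists c0.
exists a => c Fc.
have [c' Fc' sc] := Fdir _ _ Fc Fc0.
have [z c'z pz] : (p @` c') u by apply: Gu; exists c'.
have [_ ic0] := FP c0 Fc0.
have [s1 s2] := sc z c'z.
have -> : a = z by apply: ic0; [exact: mem_set|exact: mem_set|rewrite pa pz].
exact: s1.
Qed.

Lemma sec_T0 a b : a <> b -> exists C, [/\ secP C, C a & ~ C b].
Proof.
move=> nab; have [D [sD Da _]] := @sec_basis a setT openT I.
have [Db|nDb] := pselect (D b); last by exists D.
have npab : p a <> p b.
  by move=> pab; apply: nab; have [_ iD] := sD; apply: iD => //; exact: mem_set.
have [V [oV Va nVb]] := haus_sep hX npab.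
have oU : open (D `&` p @^-1` V).
  by have [[_ oD] _] := sD; apply: openI => //; move/continuousP: p_cont; apply.
have [C [sC Ca sCU]] := sec_basis oU (conj Da Va).
by exists C; split => // /sCU [].
Qed.

Lemma sec_img_open C : secP C -> open (p @` C).
Proof. by move=> [[_ oC] _]; exact: p_open. Qed.

Lemma sec_union C1 C2 : secP C1 -> secP C2 -> exists C,
  [/\ secP C, C1 `<=` C & p @` C = p @` C1 `|` p @` C2].
Proof.
move=> s1 s2; have [[cc1 oc1] i1] := s1; have [[cc2 oc2] i2] := s2.
pose C2' := C2 `&` p @^-1` (~` (p @` C1)).
have cl1 : closed (p @` C1) by exact: compact_closed hX (img_compact cc1).
have o1 : open (p @` C1) by exact: sec_img_open.
exists (C1 `|` C2'); split.
- split; [split|].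
  + apply: compactU => //; apply: compact_closedI => //.
    by apply: closed_preimage p_cont _; rewrite closedC.
  + apply: openU => //; apply: openI => //.
    by move/continuousP: p_cont; apply; exact: closed_openC.
  + move=> x y /set_mem[x1|[x2 nx]] /set_mem[y1|[y2 ny]] pxy.
    * by apply: i1 => //; exact: mem_set.
    * by exfalso; apply: ny; exists x.
    * by exfalso; apply: nx; exists y.
    * by apply: i2 => //; exact: mem_set.
- by move=> z; left.
- apply/seteqP; split.
    by move=> _ [z [z1|[z2 _]] <-]; [left|right]; exists z.
  move=> y [[z z1 <-]|[z z2 <-]]; first by exists z => //; left.
  have [y1|ny1] := pselect ((p @` C1) (p z)).
    by case: y1 => w w1 <-; exists w => //; left.
  by exists z => //; right.
Qed.

Lemma glue_sec a (y : set X) : compact y -> open y -> y (p a) ->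
  exists C, [/\ secP C, C a & p @` C = y].
Proof.
move=> cy oy ypa.
pose Good V := exists C, [/\ secP C, C a, p @` C = V & V `<=` y].
have oyp : open (p @^-1` y) by move/continuousP: p_cont; apply.
have [D [sD Da sDy]] := sec_basis oyp ypa.
have GD : Good (p @` D) by exists D; split => // _ [z /sDy ? <-].
have Gstep : forall V C2, Good V -> secP C2 -> p @` C2 `<=` y -> Good (V `|` p @` C2).
  move=> V C2 [C1 [s1 C1a <- sy]] s2 s2y.
  have [C [sC sub pC]] := sec_union s1 s2.
  by exists C; split => //; [exact: sub|move=> z [/sy|/s2y]].
have cly : closed y by exact: compact_closed hX cy.
suff [V [[C [sC Ca pC Vy]] yV]] : exists V, Good V /\ y `<=` V.
  by exists C; split => //; rewrite pC; apply/seteqP; split.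
apply: contrapT => Hn.
pose Fam := fun Z => exists2 V, Good V & Z = y `\` V.
have [u Fu] : exists u, forall Z, Fam Z -> Z u.
  apply: fip_closed.
  - move=> Z [V [C [sC _ <- _]] ->]; apply: closedI => //.
    by rewrite closedC; exact: sec_img_open.
  - move=> Z [V [C [sC _ <- _]] ->]; apply: compact_closedI => //.
    by rewrite closedC; exact: sec_img_open.
  - by exists (y `\` p @` D); exists (p @` D).
  - move=> Z [V GV ->]; apply: contrapT => /set0P/negP/negPn/eqP Z0.
    apply: Hn; exists V; split => // z yz; apply: contrapT => nVz.
    by have : (y `\` V) z by []; rewrite Z0.
  - move=> Z1 Z2 [V1 G1 ->] [V2 [C2 [s2 _ <- s2y]] ->].
    exists (y `\` (V1 `|` p @` C2)); first by exists (V1 `|` p @` C2) => //; exact: Gstep.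
    by move=> z [yz nz]; split; split => // ?; apply: nz; [left|right].
have [yu nDu] := Fu _ (ex_intro2 _ _ (p @` D) GD erefl).
have [_ [e pe]] := (et, (proj1 et) u).
have ype : (p @^-1` y) e by rewrite /= pe.
have [Cu [sCu Cue sCuy]] := sec_basis oyp ype.
have GV : Good (p @` D `|` p @` Cu).
  by apply: Gstep => // _ [z /sCuy ? <-].
have [_ ] := Fu _ (ex_intro2 _ _ _ GV erefl).
by apply; right; exists e.
Qed.

End Etale.

Section XPart.
Variables (X : topologicalType).
Hypothesis bX : boolean_space X.
Let hXX : hausdorff_space X. Proof. by case: bX. Qed.

Lemma xP0 : Defs.compact_open (@set0 X).
Proof. split; [exact: compact0|exact: (@open0 X)]. Qed.
Lemma xPopen (C : set X) : Defs.compact_open C -> open C.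
Proof. by case. Qed.
Lemma xPbasis (a : X) U : open U -> U a ->
  exists C, [/\ Defs.compact_open C, C a & C `<=` U].
Proof. by move=> oU Ua; have [_ bb] := bX; have [B [cB [Ba sB]]] := bb U a oU Ua; exists B. Qed.
Lemma xPsep c (D : set X) a : Defs.compact_open c -> Defs.compact_open D ->
  c `<=` D -> D a -> ~ c a -> exists U, [/\ open U, U a & U `&` c = set0].
Proof.
move=> [cc _] _ _ _ nca; exists (~` c); split => //.
  exact/closed_openC/(compact_closed hXX cc).
by apply/seteqP; split => // z [].
Qed.
Lemma xPfip (F : set (set X)) : (forall c, F c -> Defs.compact_open c) -> F !=set0 ->
  (forall c, F c -> c !=set0) ->
  (forall c1 c2, F c1 -> F c2 -> exists2 c, F c & c `<=` c1 `&` c2) ->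
  exists a, forall c, F c -> c a.
Proof.
move=> FP; apply: fip_closed.
  by move=> c /FP [cc _]; exact: compact_closed hXX cc.
by move=> c /FP [].
Qed.
Lemma xPT0 (a b : X) : a <> b -> exists C, [/\ Defs.compact_open C, C a & ~ C b].
Proof.
move=> /(haus_sep hXX) [U [oU Ua nUb]].
have [C [PC Ca sCU]] := xPbasis oU Ua.
by exists C; split => // /sCU.
Qed.
End XPart.

Theorem proposition3p14 (E X : topologicalType) (p : E -> X) :
  etale p -> boolean_space X ->
  exists (beta : E -> Estarstar p) (gamma : X -> Xstarstar X),
    [/\ (forall a : E, proj1_sig (beta a) = Kset p a),
        (forall u : X, proj1_sig (gamma u) = Nset u),
        homeo open (basis_open (@Lbasic E X p)) beta,
        homeo open (basis_open (@Mbasic X)) gamma &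
        (forall a : E, dual_img p (proj1_sig (beta a)) = proj1_sig (gamma (p a)))].
Proof.
move=> et bX.
have eP0 := secP0 p.
have ePopen : forall C, secP p C -> open C by move=> C [[]].
have ePbasis := sec_basis et bX.
have ePsep := sec_sep et bX.
have ePfip := sec_fip et bX.
have ePT0 := sec_T0 et bX.
have xP0' := xP0 X.
have xPopen' := @xPopen X.
have xPbasis' := xPbasis bX.
have xPsep' := xPsep bX.
have xPfip' := xPfip bX.
have xPT0' := xPT0 bX.
exists (betag eP0 ePopen ePbasis ePsep).
exists (betag xP0' xPopen' xPbasis' xPsep').
split => //.
- exact: (betag_homeo eP0 ePopen ePbasis ePsep ePfip ePT0).
- exact: (betag_homeo xP0' xPopen' xPbasis' xPsep' xPfip' xPT0').
- move=> a; apply/funext => y; apply/propext; split.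
    by move=> [C Ca e]; rewrite /= /Kg e; exists a.
  move=> /= ypa; have [cy oy] := proj2_sig y.
  have [C [sC Ca pC]] := glue_sec et bX cy oy ypa.
  by exists (exist _ C sC) => //=; rewrite pC.
Qed.
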